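(* Let $t\ge1$, let $\mathcal{F},\mathcal{G}\subseteq 2^{[k]}$ be cross $t$-intersecting families and let $1\le i<j\le k$. Suppose that $a$ is the maximal necessary intersection point of $\mathcal{F}$ and $\mathcal{G}$. Then $|[a-1]\cap F\cap G|\ge t-1$ for all $F\in\mathcal{F}$ and $G\in\mathcal{G}$. Moreover, $s_{i,j}(\mathcal{F})$ and $s_{i,j}(\mathcal{G})$ are cross $t$-intersecting and their maximal necessary intersection point is at most $a$.
   Context: Families $\mathcal{F},\mathcal{G}$ are cross $t$-intersecting if $|F\cap G|\ge t$ for all $F\in\mathcal{F},G\in\mathcal{G}$. For cross $t$-intersecting $\mathcal{F},\mathcal{G}\subseteq2^{[k]}$, an element $a\in[k]$ is a necessary intersection point of $\mathcal{F}$ and $\mathcal{G}$ if there exist $F\in\mathcal{F}$, $G\in\mathcal{G}$ with $|[a]\cap F\cap G|=t$ and $a\in F\cap G$; the maximal necessary intersection point is the largest such $a$. For $i<j$, the shifting operator is $s_{i,j}(\mathcal{F})=\{s_{i,j}(F):F\in\mathcal{F}\}$ where $s_{i,j}(F)=(F\setminus\{j\})\cup\{i\}$ if $j\in F$, $i\notin F$ and $(F\setminus\{j\})\cup\{i\}\notin\mathcal{F}$, and $s_{i,j}(F)=F$ otherwise. $[0]=\emptyset$. *)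

(* Defs.v *)
(* Ground set [k] = {1,..,k} is encoded as 'I_k, the ordinal
   x : 'I_k standing for the element x+1 of [k]. The order on elements is the
   order of ordinals, so for a : 'I_k the prefix [a] = {1,..,a} is
   [set x | x <= a] and [a-1] = [set x | x < a]. *)
From mathcomp Require Import all_boot all_order.
Set Implicit Arguments. Unset Strict Implicit. Unset Printing Implicit Defensive.

Section Defs.
Variable k : nat.

Definition prefix (a : 'I_k) : {set 'I_k} := [set x : 'I_k | x <= a].
Definition prefix_lt (a : 'I_k) : {set 'I_k} := [set x : 'I_k | x < a].

Definition cross_t_intersecting (t : nat) (FF GG : {set {set 'I_k}}) : Prop :=
  forall F G, F \in FF -> G \in GG -> t <= #|F :&: G|.

Definition necessary_intersection_point (t : nat) (FF GG : {set {set 'I_k}})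
  (a : 'I_k) : Prop :=
  exists F G, [/\ F \in FF, G \in GG, #|prefix a :&: F :&: G| = t
                & a \in F :&: G].

Definition max_necessary_intersection_point (t : nat) (FF GG : {set {set 'I_k}})
  (a : 'I_k) : Prop :=
  necessary_intersection_point t FF GG a /\
  forall b, necessary_intersection_point t FF GG b -> b <= a.

Definition shift_set (i j : 'I_k) (FF : {set {set 'I_k}}) (F : {set 'I_k})
  : {set 'I_k} :=
  if [&& j \in F, i \notin F & (i |: (F :\ j)) \notin FF]
  then i |: (F :\ j) else F.

Definition shift_family (i j : 'I_k) (FF : {set {set 'I_k}}) : {set {set 'I_k}} :=
  [set shift_set i j FF F | F in FF].

End Defs.

(* Main.v *)
Require Import Defs.
From mathcomp Require Import all_boot all_order.
Set Implicit Arguments. Unset Strict Implicit.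

Section S.
Variable k : nat.
Implicit Types (S X Y F G : {set 'I_k}).

Lemma max_elem S x0 : x0 \in S -> exists2 m, m \in S & forall y, y \in S -> y <= m.
Proof.
move=> x0S; case: (arg_maxnP (fun x : 'I_k => val x) x0S) => m mS mmax.
by exists m.
Qed.

Lemma tth n S : 1 <= n <= #|S| -> exists2 c, c \in S & #|Defs.prefix c :&: S| = n.
Proof.
move: {2}#|S| (erefl #|S|) => m; elim: m S => [|m IH] S hS /andP [n1 nm].
  by move: nm; rewrite hS leqn0 => /eqP n0; move: n1; rewrite n0.
have: 0 < #|S| by rewrite hS.
case/card_gt0P => x0 x0S; case: (max_elem x0S) => mx mS mmax.
have eqS : Defs.prefix mx :&: S = S.
  apply/setIidPr/subsetP => y yS; rewrite inE; exact: mmax.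
have [hn|hn] := ltnP n m.+1; last first.
  by exists mx => //; rewrite eqS; apply/eqP; rewrite eqn_leq nm /= hS hn.
have hS' : #|S :\ mx| = m.
  by move: hS; rewrite (cardsD1 mx S) mS add1n; case.
have := IH (S :\ mx) hS'; rewrite n1 hS' -ltnS hn => /(_ isT) [c].
rewrite !inE => /andP [cm cS] hc; exists c => //; rewrite -hc; apply: eq_card => y.
have cmx : c <= mx by apply: mmax.
have cmx' : c < mx by rewrite ltn_neqAle cmx andbT; apply: contra cm => /eqP h; apply/eqP/val_inj.
rewrite !inE; case hy: (y <= c) => //=.
case: (y =P mx) => [e|] //=.
by move: (leq_ltn_trans hy cmx'); rewrite e ltnn.
Qed.

Variables (i j : 'I_k).
Hypothesis ij : i != j.

Lemma keyXY X Y : X :\ j \subset Y -> (j \in X -> j \notin Y -> (i \in Y) && (i \notin X)) ->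
  #|X| <= #|Y|.
Proof.
move=> sXY h.
case jX: (j \in X); last first.
  by apply: subset_leq_card; apply: subset_trans sXY; apply/subsetP => x xX; rewrite !inE xX andbT; apply: contraFneq jX => <-.
case jY: (j \in Y).
  apply: subset_leq_card; apply/subsetP => x xX; case: (x =P j) => [->//|/eqP xj].
  by apply: (subsetP sXY); rewrite !inE xj.
case/andP: (h jX (negbT jY)) => iY iX.
rewrite (cardsD1 j X) jX (cardsD1 i Y) iY !add1n ltnS.
apply: subset_leq_card; apply/subsetP => x; rewrite !inE => /andP [xj xX].
rewrite (subsetP sXY) ?inE ?xj ?xX // andbT.
by apply: contraNneq iX => <-.
Qed.

Variable t : nat.
Variable A : {set 'I_k}.
Hypothesis hA : j \in A -> i \in A.

Definition tint (FF GG : {set {set 'I_k}}) :=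
  forall F G, F \in FF -> G \in GG -> t <= #|A :&: F :&: G|.

Lemma tint_sym FF GG : tint FF GG -> tint GG FF.
Proof. by move=> H G F hG hF; rewrite setIAC; apply: H. Qed.

Lemma mixed FF GG F G : tint FF GG -> F \in FF -> G \in GG ->
  [&& j \in F, i \notin F & (i |: (F :\ j)) \notin FF] ->
  ~~ [&& j \in G, i \notin G & (i |: (G :\ j)) \notin GG] ->
  t <= #|A :&: (i |: (F :\ j)) :&: G|.
Proof.
move=> H hF hG /and3P [jF iF _] cG.
case jG: (j \in G); last first.
  apply: leq_trans (H _ _ hF hG) _; apply: keyXY.
    apply/subsetP => x; rewrite !inE => /andP [xj /andP [/andP [xA xF] xG]].
    by rewrite xj xA xF xG orbT.
  by rewrite !inE jG !andbF.
case iG: (i \in G).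
  apply: leq_trans (H _ _ hF hG) _; apply: keyXY.
    apply/subsetP => x; rewrite !inE => /andP [xj /andP [/andP [xA xF] xG]].
    by rewrite xj xA xF xG orbT.
  rewrite !inE => /andP [/andP [jA _] _] _.
  by rewrite eqxx hA // iG (negbTE iF).
move: cG; rewrite jG iG /= => /negPn G2.
apply: leq_trans (H _ _ hF G2) _; apply: keyXY.
  apply/subsetP => x; rewrite !inE => /andP [xj /andP [/andP [xA xF] /orP [/eqP xi|/andP [_ xG]]]].
    by move: iF; rewrite -xi xF.
  by rewrite xj xA xF xG orbT.
by rewrite !inE eq_sym (negbTE ij) eqxx !andbF.
Qed.

Lemma shift_tint FF GG : tint FF GG -> tint (shift_family i j FF) (shift_family i j GG).
Proof.
move=> H F' G' /imsetP [F hF ->] /imsetP [G hG ->]; rewrite /shift_set.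
case cF: [&& j \in F, i \notin F & (i |: (F :\ j)) \notin FF];
case cG: [&& j \in G, i \notin G & (i |: (G :\ j)) \notin GG].
- case/and3P: cF => jF iF _; case/and3P: cG => jG iG _.
  apply: leq_trans (H _ _ hF hG) _; apply: keyXY.
    apply/subsetP => x; rewrite !inE => /andP [xj /andP [/andP [xA xF] xG]].
    by rewrite xj xA xF xG !orbT.
  rewrite !inE => /andP [/andP [jA _] _] _.
  by rewrite eqxx hA // (negbTE iF).
- by apply: (mixed H) => //; rewrite cG.
- rewrite setIAC; apply: (mixed (tint_sym H)) => //; by rewrite cF.
- exact: H.
Qed.
End S.

Lemma necE k t (FF GG : {set {set 'I_k}}) b :
  necessary_intersection_point t FF GG b <->
  [exists F in FF, exists G in GG, (#|Defs.prefix b :&: F :&: G| == t) && (b \in F :&: G)].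
Proof.
split.
  case=> F [G [hF hG e bFG]]; apply/exists_inP; exists F => //; apply/exists_inP; exists G => //.
  by rewrite e eqxx bFG.
case/exists_inP => F hF /exists_inP [G hG /andP [/eqP e bFG]]; by exists F, G.
Qed.

Lemma le_a k t (FF GG : {set {set 'I_k}}) a y : 1 <= t ->
  tint t (Defs.prefix a) FF GG -> necessary_intersection_point t FF GG y -> y <= a.
Proof.
move=> t1 H [F [G [hF hG e yFG]]]; rewrite leqNgt; apply/negP => ay.
have := H _ _ hF hG.
have : #|(Defs.prefix y :&: F :&: G) :\ y| = t.-1.
  have yin : y \in Defs.prefix y :&: F :&: G.
    by move: yFG; rewrite !inE leqnn.
  by move: e; rewrite (cardsD1 y) yin add1n => <-.
move=> e2.
suff : #|Defs.prefix a :&: F :&: G| <= t.-1.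
  by move=> h1 h2; have := leq_trans h2 h1; case: (t) t1 => // n _; rewrite ltnn.
rewrite -e2; apply: subset_leq_card; apply/subsetP => x; rewrite !inE => /andP [/andP [xa xF] xG].
rewrite xF xG (leq_trans xa (ltnW ay)) !andbT.
by apply: contraTneq xa => ->; rewrite -ltnNge.
Qed.

Unset Implicit Arguments. Set Strict Implicit.

Theorem lemma3p4 (k t : nat) (FF GG : {set {set 'I_k}}) (i j a : 'I_k) :
  1 <= t ->
  cross_t_intersecting t FF GG ->
  i < j ->
  max_necessary_intersection_point t FF GG a ->
  (forall F G, F \in FF -> G \in GG -> t.-1 <= #|prefix_lt a :&: F :&: G|) /\
  cross_t_intersecting t (shift_family i j FF) (shift_family i j GG) /\
  (exists b, max_necessary_intersection_point t
               (shift_family i j FF) (shift_family i j GG) b /\ b <= a).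
Proof.
move=> t1 H ij' [[F0 [G0 [hF0 hG0 _ _]]] amax].
have ij : i != j by apply: contraTneq ij' => ->; rewrite ltnn.
have P1 : forall F G, F \in FF -> G \in GG -> exists2 c, c \in F :&: G &
    #|Defs.prefix c :&: (F :&: G)| = t /\ c <= a.
  move=> F G hF hG; have := H _ _ hF hG => tFG.
  case: (tth (n := t) (S := F :&: G)); first by rewrite t1 tFG.
  move=> c cFG e; exists c => //; split => //; apply: amax.
  by exists F, G; rewrite setIA in e.
have tA : tint t (Defs.prefix a) FF GG.
  move=> F G hF hG; case: (P1 F G hF hG) => c cFG [e ca].
  rewrite -e setIA; apply: subset_leq_card; apply/subsetP => x; rewrite !inE.
  by case/andP=> [/andP [xc ->] ->]; rewrite (leq_trans xc ca).
have tT : tint t setT FF GG by move=> F G hF hG; rewrite setTI; apply: H.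
have hAa : j \in Defs.prefix a -> i \in Defs.prefix a.
  by rewrite !inE => ja; apply: leq_trans (ltnW ij') ja.
have sA := shift_tint ij hAa tA.
have sT := shift_tint (A := setT) ij (fun _ => in_setT i) tT.
split.
  move=> F G hF hG; case: (P1 F G hF hG) => c cFG [e ca].
  have cin : c \in Defs.prefix c :&: (F :&: G) by rewrite inE cFG inE leqnn.
  have e2 : #|(Defs.prefix c :&: (F :&: G)) :\ c| = t.-1.
    by move: e; rewrite (cardsD1 c) cin add1n => <-.
  rewrite -e2 -setIA; apply: subset_leq_card; apply/subsetP => x; rewrite !inE.
  case/andP => xc /andP [xc' xFG]; rewrite xFG andbT.
  by apply: leq_trans ca; rewrite ltn_neqAle xc' andbT; apply: contra xc => /eqP/val_inj ->.
split.
  by move=> F G hF hG; rewrite -(setTI (F :&: G)) setIA; apply: sT.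
have hF0' : shift_set i j FF F0 \in shift_family i j FF by apply: imset_f.
have hG0' : shift_set i j GG G0 \in shift_family i j GG by apply: imset_f.
set F1 := shift_set i j FF F0 in hF0'; set G1 := shift_set i j GG G0 in hG0'.
case: (tth (n := t) (S := F1 :&: G1)).
  by rewrite t1 -(setTI (F1 :&: G1)) setIA; apply: sT.
move=> c cFG e.
have nc : necessary_intersection_point t (shift_family i j FF) (shift_family i j GG) c.
  by exists F1, G1; rewrite setIA in e.
move/necE: nc => nc.
pose P := fun b : 'I_k => [exists F in shift_family i j FF, exists G in shift_family i j GG,
   (#|Defs.prefix b :&: F :&: G| == t) && (b \in F :&: G)].
case: (@arg_maxnP _ c P (fun x : 'I_k => val x) nc) => b /necE nb bmax.
exists b; split; last exact: le_a t1 sA nb.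
split => // y /necE ny; exact: bmax.
Qed.
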